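(* Let $X$ be a strongly-stable sequence with respect to a full BST $T$, and assume $X$ is a whole multiple of its atomic sequence. Then $$\hat c(GF,X,T)=\sum_{x\text{ a leaf of }T}\frac{d(x)+1}{2^{d(x)}}.$$
   Context: Binary search tree model. Keys are $\{1,\dots,n\}$. A query sequence is $X=[x_1,\dots,x_m]$, and $T_0$ is an initial BST. An algorithm $A$ serves $x_1,\dots,x_m$ in order. Before serving $x_t$ it holds a BST $T_{t-1}$; it searches $x_t$ from the root and may then restructure the tree by rotations into $T_t$. Let $P_t$ be the set of nodes on the root-to-$x_t$ path of $T_{t-1}$, and let $U_t$ be the node set of the minimal subtree containing all edges rotated in transforming $T_{t-1}$ into $T_t$. The cost at time $t$ is $|P_t\cup U_t|$. $\mathrm{cost}(A,X,T_0)$ is the sum of these costs, and $\hat c(A,X,T_0)=\mathrm{cost}(A,X,T_0)/m$. $d(x)$ is the number of edges from the root to $x$. Greedy Future ($GF$). After finding $x_t$ in $T_{t-1}$, let $v_1<\dots<v_k$ be the keys on the root-to-$x_t$ path, set $v_0=-\infty$ and $v_{k+1}=+\infty$, and let $R_0,\dots,R_k$ be the subtrees hanging off this path. For each $i$, $\tau(v_i)$ is the smallest $s>t$ with $x_s\in(v_{i-1},v_{i+1})$, or $+\infty$ if there is none. $GF$ rearranges $v_1,\dots,v_k$ as a treap: a BST in key order and a heap in $\tau$, with the smallest $\tau$ at the top. Ties in $\tau$ are broken in favor of the node of smaller depth in $T_{t-1}$. It then reattaches $R_0,\dots,R_k$ unchanged at their unique positions, giving $T_t$. Stable sequences. Let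 $T$ be a full binary search tree (every inner node has exactly two children), and let $X$ be a query sequence consisting only of keys stored at leaves of $T$. For an inner node $v$, let $X_v$ be the subsequence of $X$ consisting of the queries to keys in the subtree of $v$. The node $v$ is strongly-stable if consecutive queries of $X_v$ alternate between the left and right subtrees of $v$. $X$ (and $T$) is strongly-stable if every inner node of $T$ is strongly-stable. Given $T$ and the subtree each node's alternation starts with, the sequence is determined up to its length. Its atomic sequence is the shortest such sequence all of whose repetitions are again such sequences. $X$ is a whole multiple of its atomic sequence if it is a concatenation of copies of it. *)

(* Defs.v *)
From HB Require Import structures.
From mathcomp Require Import all_boot all_algebra.
Set Implicit Arguments. Unset Strict Implicit. Unset Printing Implicit Defensive.

Inductive bst := BNil | BNode of bst & nat & bst.

Fixpoint bst_eqb (s t : bst) : bool :=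
  match s, t with
  | BNil, BNil => true
  | BNode l k r, BNode l' k' r' => [&& bst_eqb l l', k == k' & bst_eqb r r']
  | _, _ => false
  end.

Lemma bst_eqP : Equality.axiom bst_eqb.
Proof.
elim=> [|l IHl k r IHr] [|l' k' r'] /=; try by constructor.
case: (IHl l') => [<-|H]; last by constructor; case.
case: (k =P k') => [<-|H]; last by constructor; case.
by case: (IHr r') => [<-|H]; constructor; [|case].
Qed.
HB.instance Definition _ := hasDecEq.Build bst bst_eqP.

Fixpoint inorder (t : bst) : seq nat :=
  if t is BNode l k r then inorder l ++ k :: inorder r else [::].

Definition bst_on (n : nat) (t : bst) : bool := inorder t == iota 1 n.

Fixpoint full (t : bst) : bool :=
  if t is BNode l _ r then [&& (l == BNil) == (r == BNil), full l & full r] else true.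

Fixpoint leaves (t : bst) : seq nat :=
  match t with
  | BNil => [::]
  | BNode BNil k BNil => [:: k]
  | BNode l _ r => leaves l ++ leaves r
  end.

Fixpoint depth (t : bst) (x : nat) : nat :=
  match t with
  | BNil => 0
  | BNode l k r => if x == k then 0 else if x < k then (depth l x).+1 else (depth r x).+1
  end.

(* For v = BNode l k r: the sides (true = left subtree) of the queries of X_v *)
Definition sides (l : bst) (k : nat) (r : bst) (X : seq nat) : seq bool :=
  [seq (x \in inorder l) | x <- X & x \in inorder (BNode l k r)].

Definition is_inner (l r : bst) : bool := (l != BNil) || (r != BNil).

(* every inner node is strongly-stable (consecutive queries alternate) *)
Fixpoint nodes_stable (t : bst) (X : seq nat) : bool :=
  if t is BNode l k r then
    [&& (is_inner l r ==> sorted (fun a b : bool => a != b) (sides l k r X)),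
        nodes_stable l X & nodes_stable r X]
  else true.

Definition strongly_stable (T : bst) (X : seq nat) : bool :=
  all (fun x => x \in leaves T) X && nodes_stable T X.

(* the side each inner node's alternation starts with (preorder list) *)
Fixpoint start_sides (t : bst) (X : seq nat) : seq (option bool) :=
  if t is BNode l k r then
    if is_inner l r then ohead (sides l k r X) :: (start_sides l X ++ start_sides r X)
    else [::]
  else [::].

Definition rep (j : nat) (A : seq nat) : seq nat := flatten (nseq j A).

Definition repeatable (T : bst) (A : seq nat) : Prop :=
  forall j, 0 < j -> strongly_stable T (rep j A) /\
                     start_sides T (rep j A) = start_sides T A.

Definition atomic_seq (T : bst) (X A : seq nat) : Prop :=
  [/\ A != [::], repeatable T A, start_sides T A = start_sides T X &
      forall B, B != [::] -> repeatable T B -> start_sides T B = start_sides T X ->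
        size A <= size B].

Definition whole_multiple_of_atomic (T : bst) (X : seq nat) : Prop :=
  exists A k, [/\ atomic_seq T X A, 0 < k & X = rep k A].

(* Search for x from the root (root at depth d): returns the path keys in
   increasing order, each with its depth, and the hanging subtrees R_0..R_k
   in key order. *)
Fixpoint decomp (t : bst) (x d : nat) : seq (nat * nat) * seq bst :=
  match t with
  | BNil => ([::], [:: BNil])
  | BNode l k r =>
    if x == k then ([:: (k, d)], [:: l; r])
    else if x < k then
      let p := decomp l x d.+1 in (rcons p.1 (k, d), rcons p.2 r)
    else
      let p := decomp r x d.+1 in ((k, d) :: p.1, l :: p.2)
  end.

Definition in_open (lo hi : option nat) (y : nat) : bool :=
  (if lo is Some a then a < y else true) && (if hi is Some b then y < b else true).

(* entries (key, (tau, depth)); tau is the index in the future sequence of the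
   first query in (v_{i-1}, v_{i+1}), or [size fut] (= +infinity) if none *)
Definition prios (vs : seq (nat * nat)) (fut : seq nat) : seq (nat * (nat * nat)) :=
  [seq let lo := if i is i'.+1 then Some (nth (0, 0) vs i').1 else None in
       let hi := if i.+1 < size vs then Some (nth (0, 0) vs i.+1).1 else None in
       ((nth (0, 0) vs i).1, (find (in_open lo hi) fut, (nth (0, 0) vs i).2))
  | i <- iota 0 (size vs)].

Definition plt (a b : nat * nat) : bool := (a.1 < b.1) || ((a.1 == b.1) && (a.2 < b.2)).

Definition argmin (s : seq (nat * (nat * nat))) : nat :=
  find (fun e => all (fun f => ~~ plt f.2 e.2) s) s.

(* treap on the entries es (in key order) with hanging subtrees Rs
   (size Rs = size es + 1) reattached *)
Fixpoint build (fuel : nat) (es : seq (nat * (nat * nat))) (Rs : seq bst) : bst :=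
  match fuel with
  | 0 => head BNil Rs
  | f.+1 =>
    if es is [::] then head BNil Rs else
    let i := argmin es in
    BNode (build f (take i es) (take i.+1 Rs)) (nth (0, (0, 0)) es i).1
         (build f (drop i.+1 es) (drop i.+1 Rs))
  end.

Definition gf_step (t : bst) (x : nat) (fut : seq nat) : bst :=
  let p := decomp t x 0 in
  let es := prios p.1 fut in
  build (size es) es p.2.

(* total cost of GF: at each step |P_t| (U_t is contained in P_t) *)
Fixpoint gf_cost (t : bst) (X : seq nat) : nat :=
  if X is x :: fut then size (decomp t x 0).1 + gf_cost (gf_step t x fut) fut else 0.

(* Main.v *)
Require Import Defs.
From mathcomp Require Import all_boot all_algebra.

Lemma bst_node l k r : sorted ltn (inorder (BNode l k r)) ->
  [/\ sorted ltn (inorder l), sorted ltn (inorder r),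
      forall y, y \in inorder l -> y < k & forall y, y \in inorder r -> k < y].
Proof.
rewrite /= !(sorted_pairwise ltn_trans) pairwise_cat /= => /and4P[H1 H2 H3 H4].
split=> //.
- by move=> y yl; move/allrelP: H1 => /(_ y k yl); rewrite inE eqxx => /(_ isT).
- by move=> y yr; move/allP: H3 => /(_ y yr).

Qed.

Lemma leaves_node l k r : (l != BNil) || (r != BNil) ->
  leaves (BNode l k r) = leaves l ++ leaves r.
Proof. by case: l => [|? ? ?]; case: r. Qed.

Lemma not_inner l r : ~~ is_inner l r -> l = BNil /\ r = BNil.
Proof. by rewrite /is_inner negb_or !negbK => /andP[/eqP -> /eqP ->]. Qed.

Lemma leaves_sub t : subseq (leaves t) (inorder t).
Proof.
elim: t => [|l IHl k r IHr] //.
case: (boolP (is_inner l r)) => inn.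
- rewrite leaves_node //=; apply: cat_subseq => //.
  exact: (subseq_trans IHr (subseq_cons _ _)).
- by case: (not_inner _ _ inn) => -> ->; rewrite /= eqxx.
Qed.

Definition nxt (hi : option nat) (vs : seq (nat * nat)) :=
  if vs is v :: _ then Some v.1 else hi.

Fixpoint pg (lo hi : option nat) (vs : seq (nat * nat)) (fut : seq nat) :=
  if vs is v :: vs' then
    (v.1, (find (in_open lo (nxt hi vs')) fut, v.2)) :: pg (Some v.1) hi vs' fut
  else [::].

Fixpoint lastk (lo : option nat) (vs : seq (nat * nat)) :=
  if vs is v :: vs' then lastk (Some v.1) vs' else lo.

Definition pn (lo hi : option nat) (vs : seq (nat * nat)) (fut : seq nat) :=
  [seq let lo' := if i is i'.+1 then Some (nth (0, 0) vs i').1 else lo in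
       let hi' := if i.+1 < size vs then Some (nth (0, 0) vs i.+1).1 else hi in
       ((nth (0, 0) vs i).1, (find (in_open lo' hi') fut, (nth (0, 0) vs i).2))
  | i <- iota 0 (size vs)].

Lemma prios_pn vs fut : prios vs fut = pn None None vs fut.
Proof. by []. Qed.

Lemma pn_pg lo hi vs fut : pn lo hi vs fut = pg lo hi vs fut.
Proof.
elim: vs lo => [|v vs IH] lo //.
rewrite /= -IH /pn /=; congr (_ :: _); first by case: vs IH.
rewrite (iotaDl 1 0) -map_comp; apply: eq_map => i /=.
by rewrite add1n; case: i.
Qed.

Lemma prios_pg vs fut : prios vs fut = pg None None vs fut.
Proof. by rewrite prios_pn pn_pg. Qed.

Lemma pg_cat lo hi vs1 vs2 fut :
  pg lo hi (vs1 ++ vs2) fut = pg lo (nxt hi vs2) vs1 fut ++ pg (lastk lo vs1) hi vs2 fut.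
Proof.
elim: vs1 lo => [|v vs1 IH] lo //=.
by rewrite IH; congr ((_, (find (in_open _ _) _, _)) :: _); case: vs1 {IH}.
Qed.

Lemma pg_rcons lo hi vs k d fut :
  pg lo hi (rcons vs (k, d)) fut =
  rcons (pg lo (Some k) vs fut) (k, (find (in_open (lastk lo vs) hi) fut, d)).
Proof. by rewrite -!cats1 pg_cat. Qed.

Lemma size_pg lo hi vs fut : size (pg lo hi vs fut) = size vs.
Proof. by elim: vs lo => //= v vs IH lo; rewrite IH. Qed.

Lemma pg_depth lo hi vs fut :
  map (fun e => e.2.2) (pg lo hi vs fut) = map snd vs.
Proof. by elim: vs lo => //= v vs IH lo; rewrite IH. Qed.

Lemma find_mono (P Q : pred nat) s :
  {in s, forall y, P y -> Q y} -> find Q s <= find P s.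
Proof.
elim: s => //= y s IH H.
case: (boolP (P y)) => Py; first by rewrite (H y (mem_head _ _) Py).
case: (Q y) => //; rewrite ltnS; apply: IH => z zs; apply: H.
by rewrite inE zs orbT.
Qed.

Definition lo_ok (lo : option nat) y := if lo is Some a then a < y else true.
Definition hi_ok (hi : option nat) y := if hi is Some b then y < b else true.

Lemma in_openE lo hi y : in_open lo hi y = lo_ok lo y && hi_ok hi y.
Proof. by []. Qed.

Lemma pg_tau lo hi vs fut lo' :
  all (in_open lo hi) (map fst vs) -> (forall y, lo_ok lo' y -> lo_ok lo y) ->
  all (fun e => find (in_open lo hi) fut <= e.2.1) (pg lo' hi vs fut).
Proof.
elim: vs lo' => //= v vs IH lo' /andP[vin H] Hlo.
apply/andP; split.
- apply: find_mono => y _; rewrite !in_openE => /andP[/Hlo -> /=].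
  case: vs {IH} H => [|w vs] //=.
  move=> /andP[]; rewrite in_openE => /andP[_].
  by case: hi {vin} => //= b wb _ yw; apply: ltn_trans yw wb.
- apply: IH => // y /=; move: vin; rewrite in_openE => /andP[].
  by case: lo {Hlo H} => //= a av _ vy; apply: ltn_trans av vy.
Qed.

From mathcomp Require Import zify.

Lemma plt_irr a : ~~ plt a a.
Proof. by rewrite /plt ltnn eqxx ltnn. Qed.

Lemma plt_asym a b : plt a b -> ~~ plt b a.
Proof. by case: a b => a1 a2 [b1 b2]; rewrite /plt /=; lia. Qed.

Lemma argmin_last s e : (forall f, f \in s -> plt e.2 f.2) -> argmin (rcons s e) = size s.
Proof.
move=> H; rewrite /argmin -cats1 find_cat.
have -> : has (fun e0 => all (fun f => ~~ plt f.2 e0.2) (s ++ [:: e])) s = false.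
  apply/hasP => -[f fs /allP /(_ e)]; rewrite mem_cat mem_head orbT => /(_ isT).
  by rewrite H.
rewrite /= all_cat /= plt_irr andbT.
have -> : all (fun f => ~~ plt f.2 e.2) s by apply/allP => f /H /plt_asym.
by rewrite addn0.
Qed.

Lemma argmin_first e s : (forall f, f \in s -> plt e.2 f.2) -> argmin (e :: s) = 0.
Proof.
move=> H; rewrite /argmin /= plt_irr /=.
by have -> : all (fun f => ~~ plt f.2 e.2) s by apply/allP => f /H /plt_asym.
Qed.

Lemma build_nil f Rs : build f [::] Rs = head BNil Rs.
Proof. by case: f. Qed.

Lemma build_node f es Rs : es != [::] ->
  build f.+1 es Rs =
  BNode (build f (take (argmin es) es) (take (argmin es).+1 Rs))
        (nth (0, (0, 0)) es (argmin es)).1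
        (build f (drop (argmin es).+1 es) (drop (argmin es).+1 Rs)).
Proof. by case: es. Qed.

Lemma decomp_shape t x d : size (decomp t x d).2 = (size (decomp t x d).1).+1.
Proof.
elim: t d => [|l IHl k r IHr] d //=.
case: (x == k) => //; case: (x < k) => /=; rewrite ?size_rcons ?IHl ?IHr //.
Qed.

Lemma decomp_depth t x d : all (fun v => d <= v.2) (decomp t x d).1.
Proof.
elim: t d => [|l IHl k r IHr] d //=.
case: (x == k) => /=; first by rewrite leqnn.
case: (x < k) => /=.
- rewrite all_rcons leqnn /=; apply: sub_all (IHl d.+1) => v /= /ltnW //.
- rewrite leqnn /=; apply: sub_all (IHr d.+1) => v /= /ltnW //.
Qed.

Lemma decomp_keys t x d : all (fun v => v.1 \in inorder t) (decomp t x d).1.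
Proof.
elim: t d => [|l IHl k r IHr] d //=.
case: (x == k) => /=; first by rewrite mem_cat mem_head orbT.
case: (x < k) => /=.
- rewrite all_rcons mem_cat mem_head orbT /=.
  by apply: sub_all (IHl d.+1) => v /=; rewrite mem_cat => ->.
- rewrite mem_cat mem_head orbT /=.
  by apply: sub_all (IHr d.+1) => v /=; rewrite mem_cat inE => ->; rewrite !orbT.
Qed.

Lemma decomp_size t x d : sorted ltn (inorder t) -> x \in inorder t ->
  size (decomp t x d).1 = (depth t x).+1.
Proof.
elim: t d => [|l IHl k r IHr] d //= srt.
case/bst_node: srt => sl sr Hl Hr.
rewrite mem_cat inE; case: (eqVneq x k) => [-> //|xk] /=.
case: (ltnP x k) => xk' /=.
- move=> H; rewrite size_rcons IHl //.
  by case/orP: H => // xr; have := Hr _ xr; rewrite ltnNge (ltnW xk').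
- case/orP => [/Hl|xr]; first by rewrite ltnNge xk'.
  by rewrite IHr.
Qed.

Lemma find_le (Q : pred nat) s p : p < size s -> Q (nth 0 s p) -> find Q s <= p.
Proof.
move=> ps Qp; case: (leqP (find Q s) p) => // H.
by move: (before_find 0 H); rewrite Qp.
Qed.

Lemma filter_head (P : pred nat) s : find P s < size s ->
  exists rest, filter P s = nth 0 s (find P s) :: rest.
Proof.
elim: s => //= y s IH; case: (P y) => /=; first by exists (filter P s).
by rewrite ltnS.
Qed.

Lemma lastk_ok lo vs y : lo_ok lo y -> all (fun v => v.1 < y) vs -> lo_ok (lastk lo vs) y.
Proof. by elim: vs lo => //= v vs IH lo _ /andP[vy H]; apply: IH. Qed.

Lemma nxt_ok hi vs y : hi_ok hi y -> all (fun v => y < v.1) vs -> hi_ok (nxt hi vs) y.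
Proof. by case: vs => //= v vs _ /andP[]. Qed.

Lemma stable_next l k r x fut : is_inner l r -> nodes_stable (BNode l k r) (x :: fut) ->
  x \in inorder (BNode l k r) ->
  find (fun y => y \in inorder (BNode l k r)) fut < size fut ->
  (nth 0 fut (find (fun y => y \in inorder (BNode l k r)) fut) \in inorder l) = ~~ (x \in inorder l).
Proof.
move=> inn /and3P[H _ _] xin /filter_head[rest E].
move: H; rewrite inn /= /sides /= xin /= E /=.
by case/andP; case: (x \in inorder l); case: (_ \in inorder l).
Qed.

Lemma main t x d lo hi fut f :
  sorted ltn (inorder t) -> full t -> x \in leaves t ->
  all (in_open lo hi) (inorder t) ->
  {in fut, forall y, in_open lo hi y -> y \in inorder t} ->
  nodes_stable t (x :: fut) ->
  size (decomp t x d).1 <= f ->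
  build f (pg lo hi (decomp t x d).1 fut) (decomp t x d).2 = t.
Proof.
elim: t x d lo hi f => [|l IHl k r IHr] x d lo hi f //.
move=> srt /and3P[fe fl fr] xin Hall Hfut Hstab Hf.
have [Hst sl sr] := and3P Hstab.
have srt' := srt; case/bst_node: srt' => sl' sr' Hl Hr.
have Hin : forall y, y \in inorder (BNode l k r) -> in_open lo hi y by apply/allP.
have Hk : in_open lo hi k by apply: Hin; rewrite /= mem_cat mem_head orbT.
case: (boolP (is_inner l r)) => inn; last first.
  case: (not_inner _ _ inn) => El Er; subst.
  move: xin; rewrite /= inE => /eqP E; subst x; rewrite eqxx.
  case: f Hf => [|f _]; first by rewrite /= eqxx.
  by rewrite build_node //= /argmin /= plt_irr /= !build_nil.
move: xin; rewrite leaves_node // mem_cat => /orP[] xin.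
- have xl : x \in inorder l := mem_subseq (leaves_sub l) xin.
  have xk : x < k := Hl x xl.
  move: Hf; have -> : decomp (BNode l k r) x d =
     (rcons (decomp l x d.+1).1 (k, d), rcons (decomp l x d.+1).2 r)
    by rewrite /= (ltn_eqF xk) xk.
  rewrite [size _]/= size_rcons => Hf.
  have Hsh := decomp_shape l x d.+1.
  have Hdep := decomp_depth l x d.+1.
  have Hkeys := decomp_keys l x d.+1.
  set vs := (decomp l x d.+1).1 in Hsh Hdep Hkeys *.
  set Rs := (decomp l x d.+1).2 in Hsh *.
  rewrite pg_rcons.
  set es := pg lo (Some k) vs fut.
  set ek := (k, _).
  set p := find (fun y => y \in inorder (BNode l k r)) fut.
  have Hkp : ek.2.1 <= p.
    rewrite /ek /=.
    case: (ltnP p (size fut)) => pl; last by apply: leq_trans (find_size _ _) pl.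
    apply: find_le => //.
    have yt : nth 0 fut p \in inorder (BNode l k r).
      by apply: (@nth_find _ 0 (fun y => y \in inorder (BNode l k r))); rewrite has_find.
    have xt : x \in inorder (BNode l k r) by rewrite /= mem_cat xl.
    have := stable_next l k r x fut inn Hstab xt pl; rewrite xl /= -/p => ynl.
    set y := nth 0 fut p in yt ynl *.
    have ky : k <= y.
      move: yt; rewrite /= mem_cat ynl /= inE => /orP[/eqP -> //|/Hr]; exact: ltnW.
    rewrite in_openE; have := Hin y yt; rewrite in_openE => /andP[loy ->]; rewrite andbT.
    apply: lastk_ok loy _; apply/allP => v vin.
    by have := allP Hkeys v vin => /Hl vk; apply: leq_trans vk ky.
  have Hle : forall y, y \in fut -> in_open lo (Some k) y -> y \in inorder l.
    move=> y yf; rewrite in_openE => /andP[loy /= yk].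
    have : y \in inorder (BNode l k r).
      apply: Hfut => //; rewrite in_openE loy /=.
      by move: Hk; rewrite in_openE => /andP[_]; case: (hi) => //= b kb; apply: ltn_trans yk kb.
    rewrite /= mem_cat inE => /or3P[//|/eqP E|/Hr ky]; first by rewrite E ltnn in yk.
    by have := ltn_trans yk ky; rewrite ltnn.
  have Hpk : p <= find (in_open lo (Some k)) fut.
    apply: find_mono => y yf /(Hle y yf) yl; rewrite /= mem_cat yl //.
  have Hmin : forall e, e \in es -> plt ek.2 e.2.
    move=> e ees.
    have Htau : find (in_open lo (Some k)) fut <= e.2.1.
      have H1 : all (in_open lo (Some k)) (map fst vs).
        apply/allP => _ /mapP[v vin ->]; have vl := allP Hkeys v vin.
        have := Hin v.1; rewrite /= mem_cat vl => /(_ isT).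
        by rewrite !in_openE => /andP[-> _] /=; apply: Hl.
      exact: (allP (@pg_tau lo (Some k) vs fut lo H1 (fun y h => h)) e ees).
    have Hd : d < e.2.2.
      have : e.2.2 \in map snd vs by rewrite -(pg_depth lo (Some k) vs fut); apply: map_f.
      by case/mapP => v vin ->; apply: (allP Hdep v vin).
    have h : ek.2.1 <= e.2.1 := leq_trans Hkp (leq_trans Hpk Htau).
    rewrite /plt; move: h; rewrite leq_eqVlt => /orP[/eqP ->|-> //].
    by rewrite ltnn eqxx /= Hd.
  case: f Hf => // f Hf.
  rewrite build_node; last by rewrite -size_eq0 size_rcons.
  have Ham : argmin (rcons es ek) = size es := argmin_last _ _ Hmin.
  have Hse : size es = size vs by rewrite size_pg.
  have Hse' : size Rs = (size es).+1 by rewrite Hsh Hse.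
  rewrite Ham [(_, _).2]/= nth_rcons ltnn eqxx -!cats1.
  rewrite (take_size_cat _ Hse') (take_size_cat _ (erefl (size es))).
  rewrite (drop_size_cat _ Hse') drop_oversize; last by rewrite size_cat addn1.
  rewrite !build_nil /=; congr BNode; apply: IHl => //.
  apply/allP => y yl; have := Hin y; rewrite /= mem_cat yl => /(_ isT).
  by rewrite !in_openE => /andP[-> _] /=; apply: Hl.
- have xr : x \in inorder r := mem_subseq (leaves_sub r) xin.
  have kx : k < x := Hr x xr.
  move: Hf; have -> : decomp (BNode l k r) x d =
     ((k, d) :: (decomp r x d.+1).1, l :: (decomp r x d.+1).2)
    by rewrite /= (gtn_eqF kx) ltnNge (ltnW kx).
  rewrite [size _]/= => Hf.
  have Hsh := decomp_shape r x d.+1.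
  have Hdep := decomp_depth r x d.+1.
  have Hkeys := decomp_keys r x d.+1.
  set vs := (decomp r x d.+1).1 in Hsh Hdep Hkeys Hf *.
  set Rs := (decomp r x d.+1).2 in Hsh *.
  rewrite [pg _ _ _ _]/=.
  set es := pg (Some k) hi vs fut.
  set ek := (k, _).
  set p := find (fun y => y \in inorder (BNode l k r)) fut.
  have Hkp : ek.2.1 <= p.
    rewrite /ek /=.
    case: (ltnP p (size fut)) => pl; last by apply: leq_trans (find_size _ _) pl.
    apply: find_le => //.
    have yt : nth 0 fut p \in inorder (BNode l k r).
      by apply: (@nth_find _ 0 (fun y => y \in inorder (BNode l k r))); rewrite has_find.
    have xt : x \in inorder (BNode l k r) by rewrite /= mem_cat inE xr !orbT.
    have xnl : x \in inorder l = false.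
      by apply/negP => /Hl xk; have := ltn_trans xk kx; rewrite ltnn.
    have := stable_next l k r x fut inn Hstab xt pl; rewrite xnl /= -/p => ynl.
    set y := nth 0 fut p in yt ynl *.
    have yk : y < k := Hl y ynl.
    rewrite in_openE; have := Hin y yt; rewrite in_openE => /andP[-> hiy] /=.
    apply: nxt_ok hiy _; apply/allP => v vin.
    by have := allP Hkeys v vin => /Hr kv; apply: ltn_trans yk kv.
  have Hle : forall y, y \in fut -> in_open (Some k) hi y -> y \in inorder r.
    move=> y yf; rewrite in_openE => /andP[/= ky hiy].
    have : y \in inorder (BNode l k r).
      apply: Hfut => //; rewrite in_openE hiy andbT.
      by move: Hk; rewrite in_openE => /andP[]; case: (lo) => //= a ak _; apply: ltn_trans ak ky.
    rewrite /= mem_cat inE => /or3P[/Hl yk|/eqP E|//]; last by rewrite E ltnn in ky.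
    by have := ltn_trans yk ky; rewrite ltnn.
  have Hpk : p <= find (in_open (Some k) hi) fut.
    apply: find_mono => y yf /(Hle y yf) yr; rewrite /= mem_cat inE yr !orbT //.
  have Hmin : forall e, e \in es -> plt ek.2 e.2.
    move=> e ees.
    have Htau : find (in_open (Some k) hi) fut <= e.2.1.
      have H1 : all (in_open (Some k) hi) (map fst vs).
        apply/allP => _ /mapP[v vin ->]; have vr := allP Hkeys v vin.
        have := Hin v.1; rewrite /= mem_cat inE vr !orbT => /(_ isT).
        by rewrite !in_openE => /andP[_ ->] /=; rewrite andbT; apply: Hr.
      exact: (allP (@pg_tau (Some k) hi vs fut (Some k) H1 (fun y h => h)) e ees).
    have Hd : d < e.2.2.
      have : e.2.2 \in map snd vs by rewrite -(pg_depth (Some k) hi vs fut); apply: map_f.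
      by case/mapP => v vin ->; apply: (allP Hdep v vin).
    have h : ek.2.1 <= e.2.1 := leq_trans Hkp (leq_trans Hpk Htau).
    rewrite /plt; move: h; rewrite leq_eqVlt => /orP[/eqP ->|-> //].
    by rewrite ltnn eqxx /= Hd.
  case: f Hf => // f Hf.
  rewrite build_node //.
  have Ham : argmin (ek :: es) = 0 := argmin_first _ _ Hmin.
  rewrite Ham /= drop0 !build_nil /=; congr BNode.
rewrite drop0; apply: IHr => //.
  apply/allP => y yr; have := Hin y; rewrite /= mem_cat inE yr !orbT => /(_ isT).
  by rewrite !in_openE => /andP[_ ->] /=; rewrite andbT; apply: Hr.
Qed.

Lemma nodes_stable_tail t x fut : nodes_stable t (x :: fut) -> nodes_stable t fut.
Proof.
elim: t => [|l IHl k r IHr] //= /and3P[H sl sr].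
rewrite IHl // IHr // andbT; move: H; rewrite /sides /=.
rewrite andbT; case: (x \in _); case: (is_inner l r) => //= /path_sorted //.
Qed.

Lemma gf_cost_eq T X : sorted ltn (inorder T) -> full T -> strongly_stable T X ->
  gf_cost T X = \sum_(x <- X) (depth T x).+1.
Proof.
move=> srt fT; elim: X => [|x fut IH]; first by rewrite big_nil.
rewrite /strongly_stable /= => /andP[/andP[xl allf] st].
rewrite big_cons /= -IH; last by rewrite /strongly_stable allf (nodes_stable_tail _ _ _ st).
rewrite decomp_size //; last exact: (mem_subseq (leaves_sub T) xl).
congr (_ + gf_cost _ _).
rewrite /gf_step prios_pg size_pg main //.
- by apply/allP.
- move=> y yf _; apply: (mem_subseq (leaves_sub T)); exact: (allP allf).
Qed.

Lemma bool3 (b c d : bool) : b != c -> c != d -> d = b.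
Proof. by case: b; case: c; case: d. Qed.

Lemma count_alt_aux n b s : size s <= n -> path (fun a b : bool => a != b) b s -> last b s != b ->
  count id (b :: s) = count negb (b :: s).
Proof.
elim: n b s => [|n IH] b [|c [|d s]] //=.
- by rewrite eqxx.
- by rewrite eqxx.
- by case: b; case: c.
- rewrite ltnS => sz /and3P[bc cd ps] lst.
  have db : d = b := bool3 _ _ _ bc cd.
  subst d.
  have := IH b s (leq_trans (leqnSn _) sz) ps lst => /= ->.
  have -> : c = ~~ b by move: bc; case: (b); case: (c).
  by rewrite negbK addnCA.
Qed.

Lemma count_alt (s : seq bool) : sorted (fun a b : bool => a != b) (s ++ s) ->
  count id s = count negb s.
Proof.
case: s => [|b s] //=; rewrite cat_path /= => /andP[ps /andP[lst _]].
exact: (count_alt_aux (size s) b s (leqnn _) ps lst).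
Qed.

Lemma leaf_count t A : sorted ltn (inorder t) -> full t -> nodes_stable t (A ++ A) ->
  {in A, forall y, y \in inorder t -> y \in leaves t} ->
  forall x, x \in leaves t -> count_mem x A * 2 ^ depth t x = count (fun y => y \in inorder t) A.
Proof.
elim: t => [|l IHl k r IHr] // srt /and3P[fe fl fr] /and3P[Hst sl sr] HA x.
have srt' := srt; case/bst_node: srt' => sl' sr' Hl Hr.
case: (boolP (is_inner l r)) => inn; last first.
  case: (not_inner _ _ inn) => El Er; subst.
  rewrite /= inE => /eqP ->; rewrite eqxx expn0 muln1.
  by apply: eq_count => y; rewrite /= inE.
have Hs : sorted (fun a b : bool => a != b) (sides l k r A ++ sides l k r A).
  by move: Hst; rewrite inn /= /sides filter_cat map_cat.
have Heq := count_alt _ Hs.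
have nk : forall y, y \in A -> y \in inorder (BNode l k r) -> y != k.
  move=> y yA yt; apply/eqP => E; subst y.
  move: (HA k yA yt); rewrite leaves_node // mem_cat => /orP[] /(mem_subseq (leaves_sub _)).
  + by move/Hl; rewrite ltnn.
  + by move/Hr; rewrite ltnn.
have Hcl : count id (sides l k r A) = count (fun y => y \in inorder l) A.
  rewrite /sides count_map count_filter; apply: eq_count => y /=.
  by rewrite mem_cat; case: (y \in inorder l).
have Hcr : count negb (sides l k r A) = count (fun y => y \in inorder r) A.
  rewrite /sides count_map count_filter; apply: eq_in_count => y yA /=.
  case yl : (y \in inorder l) => /=.
    by apply/esym/negP => /Hr ky; have := ltn_trans ky (Hl y yl); rewrite ltnn.
  case yr : (y \in inorder r); first by rewrite mem_cat inE yr !orbT.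
  rewrite mem_cat inE yl yr /= orbF; apply/negP => /eqP E; subst y.
  by have := nk k yA; rewrite /= mem_cat mem_head orbT eqxx => /(_ isT).
have Hct : count (fun y => y \in inorder (BNode l k r)) A =
           count (fun y => y \in inorder l) A + count (fun y => y \in inorder r) A.
  rewrite -Hcl -Hcr count_predC size_map size_filter.
  by apply: eq_count.
rewrite Hct -Hcl -Hcr -Heq leaves_node // mem_cat => /orP[] xin.
- have xl : x \in inorder l := mem_subseq (leaves_sub l) xin.
  have xk : x < k := Hl x xl.
  rewrite /= (ltn_eqF xk) xk expnS mulnCA IHl // ?Hcl ?mul2n ?addnn //.
  move=> y yA yl; have := HA y yA; rewrite [inorder _]/= mem_cat yl => /(_ isT).
  rewrite leaves_node // mem_cat => /orP[//|] /(mem_subseq (leaves_sub _)) /Hr ky.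
  by have := ltn_trans ky (Hl y yl); rewrite ltnn.
- have xr : x \in inorder r := mem_subseq (leaves_sub r) xin.
  have kx : k < x := Hr x xr.
  rewrite /= (gtn_eqF kx) ltnNge (ltnW kx) /= expnS mulnCA IHr // -?Hcr -?Heq ?mul2n ?addnn //.
  move=> y yA yr; have := HA y yA; rewrite [inorder _]/= mem_cat inE yr !orbT => /(_ isT).
  rewrite leaves_node // mem_cat => /orP[|//] /(mem_subseq (leaves_sub _)) /Hl yk.
  by have := ltn_trans (Hr y yr) yk; rewrite ltnn.
Qed.
From mathcomp Require Import ring.
Import GRing.Theory Num.Theory.

Lemma sum_count (F : nat -> nat) s X : uniq s -> all (mem s) X ->
  \sum_(x <- X) F x = \sum_(y <- s) count_mem y X * F y.
Proof.
move=> us; elim: X => [|x X IH] /=.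
  by rewrite big_nil big1 // => y _; rewrite mul0n.
move=> /andP[xs allX]; rewrite big_cons IH //.
rewrite [RHS](eq_bigr (fun y => (x == y) * F y + count_mem y X * F y)); last first.
  by move=> y _; rewrite /= mulnDl.
rewrite big_split /=; congr (_ + _).
rewrite (bigD1_seq x) //= eqxx mul1n big1 ?addn0 // => y.
by rewrite eq_sym => /negbTE ->.
Qed.

Lemma count_rep y k A : count_mem y (rep k A) = k * count_mem y A.
Proof. by elim: k => // k IH; rewrite /rep /= count_cat -/(rep k A) IH mulSn. Qed.

Lemma size_rep k A : size (rep k A) = k * size A.
Proof. by elim: k => // k IH; rewrite /rep /= size_cat -/(rep k A) IH mulSn. Qed.

Local Open Scope ring_scope.

Theorem corollary2 (n : nat) (T : bst) (X : seq nat) :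
  bst_on n T -> full T -> strongly_stable T X -> whole_multiple_of_atomic T X ->
  (gf_cost T X)%:R / (size X)%:R =
    \sum_(x <- leaves T) ((depth T x).+1)%:R / (2 ^ depth T x)%N%:R :> rat.
Proof.
move=> /eqP Hon fT ss [A [k0 [[An0 rep_ok _ _] k0pos EX]]].
have srt : sorted ltn (inorder T) by rewrite Hon; apply: iota_ltn_sorted.
have [ss2 _] := rep_ok 2%N isT.
move: ss2; rewrite /rep /= cats0 /strongly_stable all_cat => /andP[/andP[allA _] stA].
have uL : uniq (leaves T).
  by apply: (subseq_uniq (leaves_sub T)); apply: (sorted_uniq ltn_trans ltnn).
have Hc : forall y, y \in leaves T -> (count_mem y A * 2 ^ depth T y)%N = size A.
  move=> y yL; rewrite leaf_count //.
    apply/eqP; rewrite -all_count; apply/allP => z zA.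
    exact: (mem_subseq (leaves_sub T) (allP allA z zA)).
  by move=> z zA _; apply: (allP allA).
rewrite gf_cost_eq // (sum_count _ (leaves T)) //; last first.
  by move: ss; rewrite /strongly_stable => /andP[].
rewrite EX size_rep natr_sum mulr_suml; apply: eq_big_seq => y yL.
rewrite count_rep -(Hc y yL) !natrM.
have cpos : (count_mem y A != 0)%N.
  apply/eqP => c0; move: (Hc y yL); rewrite c0 mul0n => /esym /eqP.
  by rewrite size_eq0 (negbTE An0).
have k0n : (k0%:R : rat) != 0 by rewrite pnatr_eq0 -lt0n.
have cn : ((count_mem y A)%:R : rat) != 0 by rewrite pnatr_eq0.
have en : ((2 ^ depth T y)%N%:R : rat) != 0 by rewrite pnatr_eq0 expn_eq0.
field.
by rewrite k0n cn en.
Qed.
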